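(* Let $P=(X,\prec)$ be a finite twin-free poset that is a unit OC interval order. Then $P$ contains none of the following six posets as an induced subposet: $\mathbf{4}+\mathbf{1}$, $\mathbf{3}+\mathbf{1}+\mathbf{1}$, $Z$, $D$, $Y$, and the dual of $Y$.
   Context: Posets $P=(X,\prec)$ are strict (irreflexive) partial orders; $x\parallel y$ means $x,y$ are incomparable. An induced subposet is a subset of $X$ with the restricted order. Two points are twins if they have exactly the same comparabilities (same set of elements below and same set of elements above); $P$ is twin-free if it has no two distinct twins. An OC interval representation of $P$ assigns to each $x\in X$ a real interval $I(x)$ that is either open or closed, such that $x\prec y$ if and only if every point of $I(x)$ is less than every point of $I(y)$. $P$ is a unit OC interval order if it has an OC interval representation in which all intervals have the same length. The posets (all pairs not listed as comparable, nor implied by transitivity, are incomparable): $\mathbf{4}+\mathbf{1}$ has elements $a,b,c,d,x$ with $a\prec b\prec c\prec d$ and $x$ incomparable to all. $\mathbf{3}+\mathbf{1}+\mathbf{1}$ has elements $a,b,c,x,y$ with $a\prec b\prec c$ and $x,y$ incomparable to everything. $Z$ has elements $a,b,c,d,x,y$ with $a\prec b\prec c\prec d$, $x\prec d$, $a\prec y$. $D$ has elements $a,b,c,d,x$ with $a\prec b\prec d$, $a\prec c\prec d$. $Y$ has elements $a,b,c,d,x$ with $a\prec d\prec b$ and $a\prec d\prec c$. The dual of a poset is obtained by reversing all comparabilities. *)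

(* Defs.v *)
From mathcomp Require Import all_boot all_order all_algebra.
From mathcomp Require Import reals.
Set Implicit Arguments. Unset Strict Implicit. Unset Printing Implicit Defensive.
Import Order.TTheory GRing.Theory Num.Theory.
Local Open Scope ring_scope.

Definition strict_poset (T : finType) (lt : rel T) : Prop :=
  irreflexive lt /\ transitive lt.

Definition twins (T : finType) (lt : rel T) (x y : T) : Prop :=
  forall z, lt z x = lt z y /\ lt x z = lt y z.

Definition twin_free (T : finType) (lt : rel T) : Prop :=
  forall x y, x <> y -> ~ twins lt x y.

(* An interval (a, b, c): left endpoint a, right endpoint b, closed iff c. *)
Definition interval_mem (R : realType) (I : R * R * bool) (t : R) : bool :=
  let: (a, b, c) := I in
  if c then (a <= t) && (t <= b) else (a < t) && (t < b).

Definition interval_length (R : realType) (I : R * R * bool) : R :=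
  I.1.2 - I.1.1.

Definition OC_rep (R : realType) (T : finType) (lt : rel T)
    (I : T -> R * R * bool) : Prop :=
  (forall x, (I x).1.1 <= (I x).1.2) /\
  (forall x y, lt x y <->
     (forall s t, interval_mem (I x) s -> interval_mem (I y) t -> s < t)).

Definition unit_OC_interval_order (R : realType) (T : finType) (lt : rel T)
    : Prop :=
  exists (I : T -> R * R * bool) (l : R),
    OC_rep lt I /\ forall x, interval_length (I x) = l.

Definition contains_induced (T : finType) (lt : rel T) (k : nat)
    (pat : rel 'I_k) : Prop :=
  exists f : 'I_k -> T, injective f /\ forall u v, lt (f u) (f v) = pat u v.

Arguments contains_induced : clear implicits.
Arguments contains_induced {T} lt {k} pat.
Definition rel_of_pairs (k : nat) (s : seq (nat * nat)) : rel 'I_k :=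
  fun u v => (nat_of_ord u, nat_of_ord v) \in s.

(* 4+1 : a=0<b=1<c=2<d=3, x=4 isolated *)
Definition pat_4_1 : rel 'I_5 :=
  @rel_of_pairs 5 [:: (0,1); (0,2); (0,3); (1,2); (1,3); (2,3)]%N.
(* 3+1+1 : a=0<b=1<c=2, x=3, y=4 isolated *)
Definition pat_3_1_1 : rel 'I_5 :=
  @rel_of_pairs 5 [:: (0,1); (0,2); (1,2)]%N.
(* Z : a=0<b=1<c=2<d=3, x=4<d, a<y=5 *)
Definition pat_Z : rel 'I_6 :=
  @rel_of_pairs 6 [:: (0,1); (0,2); (0,3); (1,2); (1,3); (2,3); (4,3); (0,5)]%N.
(* D : a=0<b=1<d=3, a<c=2<d, x=4 isolated *)
Definition pat_D : rel 'I_5 :=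
  @rel_of_pairs 5 [:: (0,1); (0,2); (0,3); (1,3); (2,3)]%N.
(* Y : a=0<d=3<b=1, a<d<c=2, x=4 isolated *)
Definition pat_Y : rel 'I_5 :=
  @rel_of_pairs 5 [:: (0,3); (3,1); (3,2); (0,1); (0,2)]%N.
Definition pat_Ydual : rel 'I_5 := fun u v => pat_Y v u.

(* Main.v *)
Require Import Defs.
From mathcomp Require Import all_boot all_order all_algebra.
From mathcomp Require Import reals.
From mathcomp Require Import lra.
Set Implicit Arguments. Unset Strict Implicit. Unset Printing Implicit Defensive.
Import Order.TTheory GRing.Theory Num.Theory.
Local Open Scope ring_scope.

Definition LTc (R : realType) (l px py : R) (cx cy : bool) : Prop :=
  px + l < py \/ (px + l = py /\ ~~ (cx && cy)).

Lemma LT_ge (R : realType) (l px py : R) cx cy : LTc l px py cx cy -> px + l <= py.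
Proof. move=> [h|[h _]]; lra. Qed.
Lemma LT_eq (R : realType) (l px py : R) cx cy :
  LTc l px py cx cy -> py = px + l -> ~~ (cx && cy).
Proof. move=> [h|[_ h]] e //; lra. Qed.
Lemma NLT_le (R : realType) (l px py : R) cx cy : ~ LTc l px py cx cy -> py <= px + l.
Proof. move=> h; rewrite leNgt; apply/negP => h'; apply: h; left; lra. Qed.
Lemma NLT_eq (R : realType) (l px py : R) cx cy :
  ~ LTc l px py cx cy -> py = px + l -> cx && cy.
Proof.
move=> h e; case hc: (cx && cy) => //; exfalso; apply: h; right; split; first lra.
by rewrite hc.
Qed.

Lemma mem_bounds (R : realType) (a b t : R) c :
  interval_mem (a, b, c) t -> (a <= t) /\ (t <= b).
Proof. by case: c => /= /andP[h1 h2]; split => //; apply: ltW. Qed.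

Lemma mem_inner (R : realType) (a b t : R) c :
  a < t -> t < b -> interval_mem (a, b, c) t.
Proof. by move=> h1 h2; case: c => /=; rewrite ?h1 ?h2 ?(ltW h1) ?(ltW h2). Qed.

Lemma Jform (R : realType) (l : R) (J : R * R * bool) :
  interval_length J = l -> J = (J.1.1, J.1.1 + l, J.2).
Proof.
case: J => [[a b] cc]; rewrite /interval_length /= => h.
by have -> : b = a + l by lra.
Qed.

Section Bridge.
Variables (R : realType) (T : finType) (lt : rel T) (I : T -> R * R * bool) (l : R).
Hypothesis sp : strict_poset lt.
Hypothesis rep : OC_rep lt I.
Hypothesis len : forall x, interval_length (I x) = l.

Lemma l_ge0 (x : T) : 0 <= l.
Proof.
have := proj1 rep x; have := len x; rewrite /interval_length.
case: (I x) => [[a b] cc] /= h1 h2; lra.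
Qed.

Lemma nonempty x : (I x).2 || (0 < l).
Proof.
have := len x; have := proj2 rep x x; have irr := proj1 sp x.
rewrite /interval_length; case: (I x) => [[a b] cc] /= H hl.
case: cc H => //= H; have [//|hl0] := ltP 0 l.
exfalso; move/negP: irr; apply; apply/H => s t /andP[h1 h2]; lra.
Qed.

Lemma bridge x y : lt x y <-> LTc l (I x).1.1 (I y).1.1 (I x).2 (I y).2.
Proof.
have l0 := l_ge0 x.
have nx := nonempty x; have ny := nonempty y.
have := proj2 rep x y; have := proj1 rep x; have := proj1 rep y.
have := len x; have := len y; rewrite /interval_length.
case: (I x) nx => [[a b] cx]; case: (I y) ny => [[a' b'] cy] /= ny nx hy hx lxy lyy H.
rewrite H; split.
- move=> H2.
  have [h|h|h] := ltgtP b a'.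
  + by left; lra.
  + exfalso.
    have [hl|hl] := ltP 0 l.
    * have [h3|h3] := leP (b - a') l.
      - have := H2 (b - (b - a') / 3) (a' + (b - a') / 3)
          (mem_inner _ _ _) (mem_inner _ _ _).
        move=> /(_ ltac:(lra) ltac:(lra) ltac:(lra) ltac:(lra)); lra.
      - have := H2 (b - l / 2) (a' + l / 2)
          (mem_inner _ _ _) (mem_inner _ _ _).
        move=> /(_ ltac:(lra) ltac:(lra) ltac:(lra) ltac:(lra)); lra.
    * have hl0 : l = 0 by lra.
      move: nx ny; rewrite hl0 ltxx !orbF => nx ny.
      have := H2 a a'; rewrite nx ny /= !lexx /=.
      have -> : a <= b by lra.
      have -> : a' <= b' by lra.
      move=> /(_ isT isT); lra.
  + right; split; first lra.
    case hc: (cx && cy) => //; move/andP: hc => [c1 c2].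
    have := H2 b a'; rewrite c1 c2 /= !lexx /=.
    have -> : a <= b by lra.
    have -> : a' <= b' by lra.
    move=> /(_ isT isT); lra.
- move=> [h|[h hc]] s t; first by move=> /mem_bounds [s1 s2] /mem_bounds [t1 t2]; lra.
  clear H; move: hc nx ny; case: cx; case: cy => //= _ _ _ /andP[s1 s2] /andP[t1 t2]; lra.
Qed.
End Bridge.

Theorem proposition5 (R : realType) (T : finType) (lt : rel T) :
  strict_poset lt -> twin_free lt -> unit_OC_interval_order R lt ->
  ~ contains_induced lt pat_4_1 /\
  ~ contains_induced lt pat_3_1_1 /\
  ~ contains_induced lt pat_Z /\
  ~ contains_induced lt pat_D /\
  ~ contains_induced lt pat_Y /\
  ~ contains_induced lt pat_Ydual.
Proof.
move=> sp tf [I [l [rep len]]].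
pose p x := (I x).1.1. pose c x := (I x).2.
have br : forall x y, lt x y <-> LTc l (p x) (p y) (c x) (c y) := bridge sp rep len.
have nbr : forall x y, ~~ lt x y -> ~ LTc l (p x) (p y) (c x) (c y).
  by move=> x y /negP h /br.
have ne : forall x, c x || (0 < l) := nonempty sp rep len.
have tw : forall x y, p x = p y -> c x = c y -> x = y.
  move=> x y e1 e2; case: (x =P y) => // hxy; exfalso; apply: (tf x y hxy).
  have E : I x = I y.
    have Ex := Jform (len x); have Ey := Jform (len y).
    move: e1 e2; rewrite /p /c => e1 e2; rewrite Ex Ey e1 e2 //.
  move=> z; split; apply/idP/idP => /(proj2 rep) H; apply/(proj2 rep);
    by [rewrite -E | rewrite E].
split; [|split; [|split; [|split; [|split]]]].
- move=> [f [finj fh]].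
  set a := f (@Ordinal 5 0 isT). set b := f (@Ordinal 5 1 isT).
  set cc := f (@Ordinal 5 2 isT). set d := f (@Ordinal 5 3 isT).
  set x := f (@Ordinal 5 4 isT).
  have l0 := l_ge0 rep len a.
  have Hab : LTc l (p a) (p b) (c a) (c b) by apply/br; rewrite fh.
  have Hbc : LTc l (p b) (p cc) (c b) (c cc) by apply/br; rewrite fh.
  have Hcd : LTc l (p cc) (p d) (c cc) (c d) by apply/br; rewrite fh.
  have Nax : ~ LTc l (p a) (p x) (c a) (c x) by apply: nbr; rewrite fh.
  have Nxd : ~ LTc l (p x) (p d) (c x) (c d) by apply: nbr; rewrite fh.
  have := LT_ge Hab; have := LT_ge Hbc; have := LT_ge Hcd.
  have := NLT_le Nax; have := NLT_le Nxd => h1 h2 h3 h4 h5.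
  have hl : l = 0 by lra.
  have e : p b = p a + l by lra.
  have := LT_eq Hab e; have := ne a; have := ne b.
  by rewrite hl ltxx !orbF => -> ->.
- move=> [f [finj fh]].
  set a := f (@Ordinal 5 0 isT). set b := f (@Ordinal 5 1 isT).
  set cc := f (@Ordinal 5 2 isT). set x := f (@Ordinal 5 3 isT).
  set y := f (@Ordinal 5 4 isT).
  have Hab : LTc l (p a) (p b) (c a) (c b) by apply/br; rewrite fh.
  have Hbc : LTc l (p b) (p cc) (c b) (c cc) by apply/br; rewrite fh.
  have Nax : ~ LTc l (p a) (p x) (c a) (c x) by apply: nbr; rewrite fh.
  have Nxc : ~ LTc l (p x) (p cc) (c x) (c cc) by apply: nbr; rewrite fh.
  have Nay : ~ LTc l (p a) (p y) (c a) (c y) by apply: nbr; rewrite fh.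
  have Nyc : ~ LTc l (p y) (p cc) (c y) (c cc) by apply: nbr; rewrite fh.
  have := LT_ge Hab; have := LT_ge Hbc; have := NLT_le Nax; have := NLT_le Nxc.
  have := NLT_le Nay; have := NLT_le Nyc => h1 h2 h3 h4 h5 h6.
  have ex : p x = p a + l by lra.
  have ey : p y = p a + l by lra.
  have := NLT_eq Nax ex; have := NLT_eq Nay ey.
  move=> /andP[_ cy] /andP[_ cx].
  have : x = y by apply: tw; [rewrite ex ey | rewrite cx cy].
  by move/finj/(congr1 val).
- move=> [f [finj fh]].
  set a := f (@Ordinal 6 0 isT). set b := f (@Ordinal 6 1 isT).
  set cc := f (@Ordinal 6 2 isT). set d := f (@Ordinal 6 3 isT).
  set x := f (@Ordinal 6 4 isT). set y := f (@Ordinal 6 5 isT).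
  have Hab : LTc l (p a) (p b) (c a) (c b) by apply/br; rewrite fh.
  have Hbc : LTc l (p b) (p cc) (c b) (c cc) by apply/br; rewrite fh.
  have Hcd : LTc l (p cc) (p d) (c cc) (c d) by apply/br; rewrite fh.
  have Nax : ~ LTc l (p a) (p x) (c a) (c x) by apply: nbr; rewrite fh.
  have Nxc : ~ LTc l (p x) (p cc) (c x) (c cc) by apply: nbr; rewrite fh.
  have Nby : ~ LTc l (p b) (p y) (c b) (c y) by apply: nbr; rewrite fh.
  have Nyd : ~ LTc l (p y) (p d) (c y) (c d) by apply: nbr; rewrite fh.
  have := LT_ge Hab; have := LT_ge Hbc; have := LT_ge Hcd; have := NLT_le Nax.
  have := NLT_le Nxc; have := NLT_le Nby; have := NLT_le Nyd => h1 h2 h3 h4 h5 h6 h7.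
  have e1 : p y = p b + l by lra.
  have e2 : p b = p a + l by lra.
  have e3 : p x = p a + l by lra.
  have := NLT_eq Nby e1; have := LT_eq Hab e2; have := NLT_eq Nax e3.
  by move=> /andP[-> _] /negP H /andP[hb _]; apply: H; rewrite hb.
- move=> [f [finj fh]].
  set a := f (@Ordinal 5 0 isT). set b := f (@Ordinal 5 1 isT).
  set cc := f (@Ordinal 5 2 isT). set d := f (@Ordinal 5 3 isT).
  set x := f (@Ordinal 5 4 isT).
  have Hab : LTc l (p a) (p b) (c a) (c b) by apply/br; rewrite fh.
  have Hbd : LTc l (p b) (p d) (c b) (c d) by apply/br; rewrite fh.
  have Hac : LTc l (p a) (p cc) (c a) (c cc) by apply/br; rewrite fh.
  have Hcd : LTc l (p cc) (p d) (c cc) (c d) by apply/br; rewrite fh.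
  have Nax : ~ LTc l (p a) (p x) (c a) (c x) by apply: nbr; rewrite fh.
  have Nxd : ~ LTc l (p x) (p d) (c x) (c d) by apply: nbr; rewrite fh.
  have := LT_ge Hab; have := LT_ge Hbd; have := LT_ge Hac; have := LT_ge Hcd.
  have := NLT_le Nax; have := NLT_le Nxd => h1 h2 h3 h4 h5 h6.
  have eb : p b = p a + l by lra.
  have ec : p cc = p a + l by lra.
  have ex : p x = p a + l by lra.
  have := LT_eq Hab eb; have := LT_eq Hac ec; have := NLT_eq Nax ex.
  move=> /andP[ca _]; rewrite ca /= => /negbTE hc /negbTE hb.
  have : b = cc by apply: tw; [rewrite eb ec | rewrite hb hc].
  by move/finj/(congr1 val).
- move=> [f [finj fh]].
  set a := f (@Ordinal 5 0 isT). set b := f (@Ordinal 5 1 isT).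
  set cc := f (@Ordinal 5 2 isT). set d := f (@Ordinal 5 3 isT).
  set x := f (@Ordinal 5 4 isT).
  have Had : LTc l (p a) (p d) (c a) (c d) by apply/br; rewrite fh.
  have Hdb : LTc l (p d) (p b) (c d) (c b) by apply/br; rewrite fh.
  have Hdc : LTc l (p d) (p cc) (c d) (c cc) by apply/br; rewrite fh.
  have Nax : ~ LTc l (p a) (p x) (c a) (c x) by apply: nbr; rewrite fh.
  have Nxb : ~ LTc l (p x) (p b) (c x) (c b) by apply: nbr; rewrite fh.
  have Nxc : ~ LTc l (p x) (p cc) (c x) (c cc) by apply: nbr; rewrite fh.
  have := LT_ge Had; have := LT_ge Hdb; have := LT_ge Hdc.
  have := NLT_le Nax; have := NLT_le Nxb; have := NLT_le Nxc => h1 h2 h3 h4 h5 h6.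
  have eb : p b = p x + l by lra.
  have ec : p cc = p x + l by lra.
  have := NLT_eq Nxb eb; have := NLT_eq Nxc ec.
  move=> /andP[_ hc] /andP[_ hb].
  have : b = cc by apply: tw; [rewrite eb ec | rewrite hb hc].
  by move/finj/(congr1 val).
- move=> [f [finj fh]].
  set a := f (@Ordinal 5 0 isT). set b := f (@Ordinal 5 1 isT).
  set cc := f (@Ordinal 5 2 isT). set d := f (@Ordinal 5 3 isT).
  set x := f (@Ordinal 5 4 isT).
  have Hda : LTc l (p d) (p a) (c d) (c a) by apply/br; rewrite fh.
  have Hbd : LTc l (p b) (p d) (c b) (c d) by apply/br; rewrite fh.
  have Hcd : LTc l (p cc) (p d) (c cc) (c d) by apply/br; rewrite fh.
  have Nxa : ~ LTc l (p x) (p a) (c x) (c a) by apply: nbr; rewrite fh.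
  have Nbx : ~ LTc l (p b) (p x) (c b) (c x) by apply: nbr; rewrite fh.
  have Ncx : ~ LTc l (p cc) (p x) (c cc) (c x) by apply: nbr; rewrite fh.
  have := LT_ge Hda; have := LT_ge Hbd; have := LT_ge Hcd.
  have := NLT_le Nxa; have := NLT_le Nbx; have := NLT_le Ncx => h1 h2 h3 h4 h5 h6.
  have eb : p x = p b + l by lra.
  have ec : p x = p cc + l by lra.
  have := NLT_eq Nbx eb; have := NLT_eq Ncx ec.
  move=> /andP[hc _] /andP[hb _].
  have : b = cc by apply: tw; [lra | rewrite hb hc].
  by move/finj/(congr1 val).
Qed.
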